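(* In the coding module below, if the field size satisfies $q\ge n$, then for each $j$ a value $\alpha_j\in\mathbb{F}_q$ satisfying the module's requirement exists, and the resulting linear combination $\mathbf{g}$ has the property that every receiver whose next unseen packet has arrived at the sender and that successfully receives $\mathbf{g}$ sees its next unseen packet.
   Context: A sender holds packets $\mathbf{p}_1,\mathbf{p}_2,\dots$ (vectors over $\mathbb{F}_q$, indexed by arrival order) and broadcasts linear combinations to $n$ receivers; via feedback it knows each receiver's knowledge space (the set of linear combinations of packets the receiver can compute). A receiver has seen $\mathbf{p}_k$ if it can compute $\mathbf{p}_k+\mathbf{q}$ where $\mathbf{q}$ is a linear combination of packets with index greater than $k$. If receiver $r$ has seen $\mathbf{p}_k$, its witness $\mathbf{W}_r(\mathbf{p}_k)$ is the unique linear combination known to $r$ of the form $\mathbf{p}_k+\mathbf{q}$ where $\mathbf{q}$ involves only packets of index greater than $k$ that $r$ has not seen. A receiver's next unseen packet is its lowest-index unseen packet. Coding module: let $u_1<\dots<u_m$ be the distinct indices of the next unseen packets of the receivers whose next unseen packet has arrived at the sender, and $R(u_i)$ the set of such receivers whose next unseen packet is $\mathbf{p}_{u_i}$. For $j=1$ to $m$: for each $r\in R(u_j)$ (which has seen $\mathbf{p}_{u_i}$ for all $i<j$), let $\mathbf{y}_r=\sum_{i=1}^{j-1}\alpha_i\mathbf{W}_r(\mathbf{p}_{u_i})$, and pick $\alpha_j\in\mathbb{F}_q$ different from the coefficient of $\mathbf{p}_{u_j}$ in $\mathbf{y}_r$ for every $r\in R(u_j)$. Transmit $\mathbf{g}=\sum_{i=1}^m\alpha_i\mathbf{p}_{u_i}$.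 *)

(* Defs.v *)
From HB Require Import structures.
From mathcomp Require Import all_boot all_order all_algebra.
Set Implicit Arguments. Unset Strict Implicit. Unset Printing Implicit Defensive.
Import GRing.Theory.
Local Open Scope ring_scope.

(* Packets that have arrived at the sender: p_0, ..., p_(N-1) (0-based,
   in arrival order).  A linear combination of them is its coefficient row
   vector in 'rV[F]_N.  A receiver's knowledge space is the row space of a
   matrix K : 'M[F]_N. *)

Section Defs.
Variables (F : finFieldType) (N : nat).

Definition seenb (K : 'M[F]_N) (k : 'I_N) : bool :=
  [exists v : 'rV[F]_N, [&& (v <= K)%MS, v 0 k == 1 &
      [forall i : 'I_N, (i < k)%N ==> (v 0 i == 0)]]].

Definition witnessb (K : 'M[F]_N) (k : 'I_N) (w : 'rV[F]_N) : bool :=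
  [&& (w <= K)%MS, w 0 k == 1 &
      [forall i : 'I_N, ((i < k)%N || ((k < i)%N && seenb K i)) ==> (w 0 i == 0)]].

Definition witness (K : 'M[F]_N) (k : 'I_N) : 'rV[F]_N :=
  odflt 0 [pick w | witnessb K k w].

Definition is_nus (K : 'M[F]_N) (k : 'I_N) : bool :=
  ~~ seenb K k && [forall i : 'I_N, (i < k)%N ==> seenb K i].

Variable n : nat.
Variable Kn : 'I_n -> 'M[F]_N.

Definition nus_set : {set 'I_N} := [set k | [exists r : 'I_n, is_nus (Kn r) k]].

Definition ycomb (r : 'I_n) (alpha : 'I_N -> F) (u : 'I_N) : 'rV[F]_N :=
  \sum_(v in nus_set | (v < u)%N) alpha v *: witness (Kn r) v.

Definition gcomb (alpha : 'I_N -> F) : 'rV[F]_N :=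
  \row_k (if k \in nus_set then alpha k else 0).

Definition alpha_ok (alpha : 'I_N -> F) (u : 'I_N) (a : F) : bool :=
  [forall r : 'I_n, is_nus (Kn r) u ==> (a != ycomb r alpha u 0 u)].

End Defs.

(* Main.v *)
Require Import Defs.
From mathcomp Require Import all_boot all_order all_algebra.
From mathcomp Require Import zify.
Import GRing.Theory.
Local Open Scope ring_scope.

Lemma subB_sub (F : finFieldType) m1 m2 k (A B : 'M[F]_(m1,k)) (C : 'M[F]_(m2,k)) :
  (A <= C)%MS -> (B <= C)%MS -> (A - B <= C)%MS.
Proof. by move=> hA hB; rewrite -scaleN1r addmx_sub // scalemx_sub. Qed.

Lemma witness_ex (F : finFieldType) N (K : 'M[F]_N) (k : 'I_N) :
  seenb K k -> exists w, witnessb K k w.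
Proof.
move=> /existsP[v /and3P[vK vk vlt]].
suff H : forall t : nat, exists w : 'rV[F]_N, [&& (w <= K)%MS, w 0 k == 1 &
   [forall i : 'I_N, ((i < k)%N || [&& (k < i)%N, (i < t)%N & seenb K i]) ==> (w 0 i == 0)]].
  have [w /and3P[wK wk wz]] := H N.
  exists w; apply/and3P; split=> //; apply/forallP=> i; apply/implyP=> hi.
  apply: (implyP ((elimT forallP wz) i)); case/orP: hi => [hh|hh]. rewrite hh //. case/andP: hh => h1 h2. by rewrite h1 h2 ltn_ord orbC.
elim=> [|t [w /and3P[wK wk wz]]].
  exists v; apply/and3P; split=> //; apply/forallP=> i; apply/implyP=> hi.
  by apply: (implyP ((elimT forallP vlt) i)); case/orP: hi => [//|/and3P[_ ]].
case: (ltnP t N) => [tN|tN]; last first.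
  exists w; apply/and3P; split=> //; apply/forallP=> i; apply/implyP=> hi.
  apply: (implyP ((elimT forallP wz) i)); case/orP: hi => [->//|/and3P[h1 h2 h3]].
  by rewrite h1 h3 (leq_trans (ltn_ord i) tN) orbC.
set i0 := Ordinal tN.
case hs: ((k < t)%N && seenb K i0); last first.
  exists w; apply/and3P; split=> //; apply/forallP=> i; apply/implyP=> hi.
  apply: (implyP ((elimT forallP wz) i)); case/orP: hi => [->//|/and3P[h1 h2 h3]].
  rewrite h1 h3 andbT orbC; rewrite ltnS leq_eqVlt in h2; case/orP: h2 => [/eqP ei|->//].
  have ei' : i = i0 by apply/val_inj; rewrite /= ei.
  by rewrite ei' /= in h1 h3; rewrite h1 h3 in hs.
case/andP: hs => kt /existsP[s /and3P[sK st sz]].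
exists (w - w 0 i0 *: s); apply/and3P; split.
- by rewrite subB_sub // scalemx_sub.
- rewrite !mxE (eqP (implyP ((elimT forallP sz) k) _)) ?mulr0 ?subr0 //.
- apply/forallP=> i; apply/implyP=> hi; rewrite !mxE.
  case: (ltngtP i t) => [it|ti|/eqP ei].
  + rewrite (eqP (implyP ((elimT forallP sz) i) it)) mulr0 subr0.
    apply: (implyP ((elimT forallP wz) i)); case/orP: hi => [->//|/and3P[h1 h2 h3]].
    by rewrite h1 it h3 orbT.
  + by exfalso; case/orP: hi => [|/and3P[_ h _]]; lia.
  + have -> : i = i0 by apply/val_inj; rewrite /= (eqP ei).
    by rewrite (eqP st) mulr1 subrr.
Qed.

Lemma nus_uniq (F : finFieldType) N (K : 'M[F]_N) (u v : 'I_N) :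
  is_nus K u -> is_nus K v -> (v < u)%N -> False.
Proof.
move=> /andP[_ /forallP hu] /andP[hv _] vu.
by move: (implyP (hu v) vu); rewrite (negbTE hv).
Qed.

Arguments nus_uniq {F N K u v}.
Arguments witness_ex {F N K k}.

Lemma part1 (F : finFieldType) (n N : nat) (K : 'I_n -> 'M[F]_N) :
  (n <= #|F|)%N ->
  (forall u : 'I_N, u \in nus_set K ->
     forall beta : 'I_N -> F, exists a : F, alpha_ok K beta u a).
Proof.
move=> hn u hu beta.
set S := [set r | is_nus (K r) u].
set f := fun r => ycomb K r beta u 0 u.
have hcard : (#|f @: S| < #|F|)%N.
  case hmin: [exists v, (v \in nus_set K) && (v < u)%N].
    case/existsP: hmin => v /andP[]; rewrite inE => /existsP[r' hr'] vu.
    apply: leq_ltn_trans (leq_imset_card _ _) _.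
    apply: leq_trans _ hn.
    have : S \proper [set: 'I_n].
      rewrite properT; apply/negP => /eqP hS.
      have : r' \in S by rewrite hS inE.
      rewrite inE => hr'u; exact: (nus_uniq hr'u hr' vu).
    by move/proper_card; rewrite cardsT card_ord.
  have h0 : f @: S \subset [set 0].
    apply/subsetP => x /imsetP[r _ ->]; rewrite inE /f /ycomb big_pred0 ?mxE //.
    by move=> v; apply/negbTE; move/negbT: hmin; rewrite negb_exists => /forallP.
  apply: leq_ltn_trans (subset_leq_card h0) _; rewrite cards1.
  have : [set 0; 1] \subset [set: F] by apply/subsetP.
  by move/subset_leq_card; rewrite cardsT cards2 eq_sym oner_neq0.
case: (pickP [pred a | a \notin f @: S]) => [a /= Ha|H0]; last first.
  have : [set: F] \subset f @: S.
    by apply/subsetP => x _; move: (H0 x) => /= /negbFE.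
  by move/subset_leq_card; rewrite cardsT leqNgt hcard.
exists a; apply/forallP => r; apply/implyP => hr.
apply: contraNneq Ha => ->; apply: imset_f; by rewrite inE.
Qed.

Lemma part2 (F : finFieldType) (n N : nat) (K : 'I_n -> 'M[F]_N) (alpha : 'I_N -> F) :
     (forall u : 'I_N, u \in nus_set K -> alpha_ok K alpha u (alpha u)) ->
     forall (r : 'I_n) (u : 'I_N), is_nus (K r) u ->
       seenb (K r + gcomb K alpha)%MS u.
Proof.
move=> halpha r u hnus.
set y := ycomb K r alpha u.
set z := gcomb K alpha - y.
have hu : u \in nus_set K by rewrite inE; apply/existsP; exists r.
have hseen : forall v : 'I_N, (v < u)%N -> seenb (K r) v.
  by move=> v vu; case/andP: hnus => _ /forallP h; exact: (implyP (h v) vu).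
have hwit : forall v : 'I_N, (v < u)%N -> witnessb (K r) v (witness (K r) v).
  move=> v vu; rewrite /witness; case: pickP => [w //|H].
  by have [w hw] := witness_ex (hseen v vu); rewrite H in hw.
have hz : forall i : 'I_N, (i < u)%N -> z 0 i = 0.
  move=> i iu.
  have hw : forall v : 'I_N, (v < u)%N -> witness (K r) v 0 i = (v == i)%:R.
    move=> v vu; have /and3P[_ h1 h2] := hwit v vu.
    case: (ltngtP i v) => [iv|vi|ev].
    - have -> : (v == i) = false by apply/negbTE; apply/eqP => e; move: iv; rewrite e ltnn.
      by rewrite (eqP (implyP ((elimT forallP h2) i) _)) ?iv.
    - have -> : (v == i) = false by apply/negbTE; apply/eqP => e; move: vi; rewrite e ltnn.
      by rewrite (eqP (implyP ((elimT forallP h2) i) _)) // vi hseen ?orbT.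
    - have -> : i = v by apply/val_inj; rewrite /= ev.
      by rewrite eqxx (eqP h1).
  rewrite /z /y /ycomb !mxE summxE.
  rewrite (eq_bigr (fun v => if v == i then alpha v else 0)); last first.
    move=> v /andP[_ vu]; rewrite mxE hw //; case: eqP => _; by rewrite ?mulr1 ?mulr0.
  rewrite -big_mkcondr /=.
  case hi: (i \in nus_set K).
    rewrite (big_pred1 i) ?subrr //.
    by move=> v /=; case: eqP => [->|_]; rewrite ?hi ?iu ?andbF.
  rewrite big_pred0 ?subr0 //.
  by move=> v; case: eqP => [->|_]; rewrite ?hi ?andbF.
have hzu : z 0 u != 0.
  rewrite /z !mxE hu subr_eq0.
  exact: (implyP ((elimT forallP (halpha u hu)) r) hnus).
apply/existsP; exists ((z 0 u)^-1 *: z); apply/and3P; split.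
- apply: scalemx_sub; apply: subB_sub; first exact: addsmxSr.
  apply: summx_sub => v /andP[_ vu]; apply: scalemx_sub.
  by apply: submx_trans (addsmxSl _ _); case/and3P: (hwit v vu).
- by rewrite mxE mulVf.
- apply/forallP => i; apply/implyP => iu; by rewrite mxE (hz i iu) mulr0.
Qed.

Theorem theorem8 (F : finFieldType) (n N : nat) (K : 'I_n -> 'M[F]_N) :
  (n <= #|F|)%N ->
  (* existence of alpha_j given the previously chosen alpha_i, i < j *)
  (forall u : 'I_N, u \in nus_set K ->
     forall beta : 'I_N -> F, exists a : F, alpha_ok K beta u a) /\
  (* every such choice makes g innovative for every affected receiver *)
  (forall alpha : 'I_N -> F,
     (forall u : 'I_N, u \in nus_set K -> alpha_ok K alpha u (alpha u)) ->
     forall (r : 'I_n) (u : 'I_N), is_nus (K r) u ->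
       seenb (K r + gcomb K alpha)%MS u).
Proof.
move=> hn; split; first exact: part1.
exact: part2.
Qed.
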